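(* Let $G$ be a nilpotent group of class $5$. Then for all $g_1,g_2,h_1,h_2\in G$ and all $n\in\mathbb{N}$, in $G\wedge G$, $$((g_1\wedge h_1)(g_2\wedge h_2))^n = ([g_2,h_2]\wedge [[g_2,h_2],[g_1,h_1]])^{\binom{n}{3}} ([g_1,h_1]\wedge [[g_2,h_2],[g_1,h_1]])^{2\binom{n}{3}+\binom{n}{2}} ([g_2,h_2]\wedge [g_1,h_1])^{\binom{n}{2}} (g_1\wedge h_1)^n (g_2\wedge h_2)^n.$$
   Context: Conventions: ${}^g h = ghg^{-1}$, $[g,h]=ghg^{-1}h^{-1}$; $\binom{n}{r}=0$ if $r>n$. The nonabelian tensor square $G\otimes G$ is generated by symbols $g\otimes h$ subject to $gg'\otimes h=({}^g g'\otimes {}^g h)(g\otimes h)$ and $g\otimes hh'=(g\otimes h)({}^h g\otimes {}^h h')$; the exterior square $G\wedge G$ is its quotient by the subgroup generated by all $x\otimes x$, and $g\wedge h$ denotes the image of $g\otimes h$. *)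

(* Defs.v *)
(* groups are arbitrary
   (possibly infinite), so they are given as an explicit record. *)
From mathcomp Require Import all_boot.
Set Implicit Arguments. Unset Strict Implicit. Unset Printing Implicit Defensive.

Record group := Group {
  carrier :> Type;
  gmul : carrier -> carrier -> carrier;
  gone : carrier;
  ginv : carrier -> carrier;
  gmulA : forall x y z, gmul x (gmul y z) = gmul (gmul x y) z;
  gmul1 : forall x, gmul gone x = x;
  gmulV : forall x, gmul (ginv x) x = gone
}.

Section GroupOps.
Variable G : group.

Fixpoint gpow (x : G) (n : nat) : G :=
  match n with 0 => gone G | n'.+1 => gmul x (gpow x n') end.

Definition gconj (g h : G) : G := gmul (gmul g h) (ginv g).

Definition gcomm (g h : G) : G :=
  gmul (gmul (gmul g h) (ginv g)) (ginv h).

Inductive gen (S : G -> Prop) : G -> Prop :=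
| gen_in x : S x -> gen S x
| gen_one : gen S (gone G)
| gen_mul x y : gen S x -> gen S y -> gen S (gmul x y)
| gen_inv x : gen S x -> gen S (ginv x).

(* lower central series: lcs k = gamma_{k+1}(G);
   gamma_1 = G, gamma_{k+1} = [gamma_k, G]. *)
Fixpoint lcs (k : nat) : G -> Prop :=
  match k with
  | 0 => fun _ => True
  | k'.+1 => gen (fun z => exists x y, lcs k' x /\ z = gcomm x y)
  end.

Definition nilpotent_of_class (c : nat) : Prop :=
  forall x, lcs c x -> x = gone G.

(* An exterior pairing G x G -> W: a map satisfying the defining
   relations of the nonabelian exterior square G /\ G.  G /\ G is the
   universal such pairing, so an identity holds in G /\ G (between images
   of the generators g /\ h) iff it holds for every exterior pairing. *)
Definition exterior_pairing (W : group) (w : G -> G -> W) : Prop :=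
  [/\ (forall g g' h, w (gmul g g') h = gmul (w (gconj g g') (gconj g h)) (w g h)),
      (forall g h h', w g (gmul h h') = gmul (w g h) (w (gconj h g) (gconj h h')))
    & (forall x, w x x = gone W)].

End GroupOps.

(* Main.v *)
Require Import Defs.
From mathcomp Require Import all_boot.
From mathcomp Require Import zify.
Set Implicit Arguments. Unset Strict Implicit. Unset Printing Implicit Defensive.

Section Basics.
Variable G : group.
Implicit Types x y z : G.

Lemma mulgV x : gmul x (ginv x) = gone G.
Proof.
rewrite -[gmul x (ginv x)]gmul1 -{1}(gmulV (ginv x)).
by rewrite -gmulA (gmulA (ginv x)) gmulV gmul1 gmulV.
Qed.

Lemma mulg1 x : gmul x (gone G) = x.
Proof. by rewrite -(gmulV x) gmulA mulgV gmul1. Qed.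

Lemma mulKg x y : gmul (ginv x) (gmul x y) = y.
Proof. by rewrite gmulA gmulV gmul1. Qed.

Lemma mulKVg x y : gmul x (gmul (ginv x) y) = y.
Proof. by rewrite gmulA mulgV gmul1. Qed.

Lemma mul_cancel_l x y z : gmul x y = gmul x z -> y = z.
Proof. by move=> e; rewrite -(mulKg x y) e mulKg. Qed.

Lemma mul_cancel_r x y z : gmul y x = gmul z x -> y = z.
Proof. by move=> e; rewrite -(mulg1 y) -(mulgV x) gmulA e -gmulA mulgV mulg1. Qed.

Lemma invgK x : ginv (ginv x) = x.
Proof. by apply: (@mul_cancel_l (ginv x)); rewrite mulgV gmulV. Qed.

Lemma invMg x y : ginv (gmul x y) = gmul (ginv y) (ginv x).
Proof.
apply: (@mul_cancel_l (gmul x y)); rewrite mulgV.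
by rewrite -gmulA mulKVg mulgV.
Qed.

Lemma inv1 : ginv (gone G) = gone G.
Proof. by rewrite -{2}(gmulV (gone G)) mulg1. Qed.

End Basics.

Ltac gnorm := rewrite /gconj /gcomm;
  repeat progress rewrite -?gmulA ?gmul1 ?mulg1 ?gmulV ?mulgV ?mulKg ?mulKVg ?invMg ?invgK ?inv1.

Ltac gnorm_in H := rewrite /gconj /gcomm in H;
  repeat progress rewrite -?gmulA ?gmul1 ?mulg1 ?gmulV ?mulgV ?mulKg ?mulKVg ?invMg ?invgK ?inv1 in H.

Section GSide.
Variable G : group.
Implicit Types x y z g h u : G.

Definition nsub (P : G -> Prop) :=
  [/\ P (gone G), (forall x y, P x -> P y -> P (gmul x y)),
      (forall x, P x -> P (ginv x)) & (forall g x, P x -> P (gconj g x))].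

Lemma nsubS P : nsub P -> nsub (fun x => forall y, P (gcomm x y)).
Proof.
case=> P1 PM PV PC; split.
- move=> y; have -> : gcomm (gone G) y = gone G by gnorm.
  exact: P1.
- move=> x x' Hx Hx' y.
  have -> : gcomm (gmul x x') y = gmul (gconj x (gcomm x' y)) (gcomm x y) by gnorm.
  by apply: PM; [apply: PC|].
- move=> x Hx y.
  have -> : gcomm (ginv x) y = gconj (ginv x) (ginv (gcomm x y)) by gnorm.
  by apply: PC; apply: PV.
- move=> g x Hx y.
  have -> : gcomm (gconj g x) y = gconj g (gcomm x (gconj (ginv g) y)) by gnorm.
  by apply: PC.
Qed.

Fixpoint Zc (k : nat) : G -> Prop :=
  match k with
  | 0 => fun x => x = gone G
  | k'.+1 => fun x => forall y, Zc k' (gcomm x y)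
  end.

Lemma nsubZ k : nsub (Zc k).
Proof.
elim: k => [|k IH] /=.
- split=> //.
  + by move=> x y -> ->; rewrite gmul1.
  + by move=> x ->; rewrite inv1.
  + by move=> g x ->; gnorm.
- exact: nsubS.
Qed.

Lemma keyK P u g h : nsub P -> (forall y z, P (gcomm (gcomm u y) z)) ->
  P (gcomm u (gcomm g h)).
Proof.
case=> P1 PM PV PC H.
have -> : gcomm u (gcomm g h) =
  gmul (gcomm (gcomm u g) (gmul g (gmul (gcomm u h) (gmul h (ginv g)))))
       (gconj g (gcomm (gcomm u h) (gmul h (gmul (ginv g) (ginv h))))) by gnorm.
by apply: PM; [|apply: PC].
Qed.

Lemma lcs_Z (hG : nilpotent_of_class G 5) j : forall k x, k + j = 5 -> lcs k x -> Zc j x.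
Proof.
elim: j => [|j IH] k x e Hx /=.
- by apply: hG; rewrite addn0 in e; rewrite -e.
- move=> y; apply: (IH k.+1); first by rewrite addSn -addnS.
  by apply: gen_in; exists x, y.
Qed.

Lemma comm_d (hG : nilpotent_of_class G 5) g1 h1 g2 h2 :
  let d := gcomm (gcomm g2 h2) (gcomm g1 h1) in
  gcomm (gcomm g1 h1) d = gone G /\ gcomm (gcomm g2 h2) d = gone G.
Proof.
move=> d.
have l1 : forall g h, lcs 1 (gcomm g h) by move=> g h; apply: gen_in; exists g, h.
have Z4 : Zc 4 (gcomm g2 h2) by apply: (lcs_Z hG (k:=1)).
have Zd : Zc 2 d by apply: keyK; [exact: nsubZ|exact: Z4].
have D : forall g h, gcomm d (gcomm g h) = gone G.
  by move=> g h; apply: (keyK (P := Zc 0)); [exact: nsubZ|exact: Zd].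
have sw : forall x y, gcomm x y = ginv (gcomm y x) by move=> x y; gnorm.
by rewrite !(sw _ d) !D inv1.
Qed.

End GSide.
Section Pairing.
Variables (G W : group) (w : G -> G -> W).
Hypothesis hw : exterior_pairing w.
Implicit Types g h u v x y : G.

Lemma R1 g g' h : w (gmul g g') h = gmul (w (gconj g g') (gconj g h)) (w g h).
Proof. by case: hw. Qed.
Lemma R2 g h h' : w g (gmul h h') = gmul (w g h) (w (gconj h g) (gconj h h')).
Proof. by case: hw. Qed.

Lemma w1l h : w (gone G) h = gone W.
Proof.
have := R1 (gone G) (gone G) h => H; gnorm_in H.
rewrite -{1}(mulg1 (w (gone G) h)) in H.
by symmetry; apply: mul_cancel_l H.
Qed.

Lemma E2 g h g' h' :
  gmul (w g h) (w (gconj (gmul h g) g') (gconj (gmul h g) h')) =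
  gmul (w (gconj (gmul g h) g') (gconj (gmul g h) h')) (w g h).
Proof.
have A1 := R1 g g' (gmul h h'); have A2 := R2 (gconj g g') (gconj g h) (gconj g h').
have A3 := R2 g h h'; have B1 := R2 (gmul g g') h h'; have B2 := R1 g g' h.
have B3 := R1 (gconj h g) (gconj h g') (gconj h h').
gnorm_in A1; gnorm_in A2; gnorm_in A3; gnorm_in B1; gnorm_in B2; gnorm_in B3.
rewrite A2 A3 in A1; rewrite B2 B3 A1 in B1.
gnorm_in B1.
move/mul_cancel_l: B1; rewrite !gmulA => /mul_cancel_r.
gnorm => ->. done.
Qed.

Lemma E2' g h u v :
  gmul (w g h) (w u v) =
  gmul (w (gconj (gcomm g h) u) (gconj (gcomm g h) v)) (w g h).
Proof.
have := E2 g h (gconj (ginv (gmul h g)) u) (gconj (ginv (gmul h g)) v) => H.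
gnorm_in H; gnorm; exact: H.
Qed.

Lemma Winv x z : w (ginv x) z = ginv (w x (gconj (ginv x) z)).
Proof.
have := R1 (ginv x) x z => H; rewrite gmulV w1l in H.
apply: (@mul_cancel_l _ (w x (gconj (ginv x) z))).
rewrite mulgV H; congr (gmul (w _ _) _); gnorm; done.
Qed.

Lemma F g h y : w (gcomm g h) y = gmul (w g h) (ginv (w (gconj y g) (gconj y h))).
Proof.
have r1 := R1 g (gmul h (gmul (ginv g) (ginv h))) y.
have wi := Winv (gconj (gmul g h) g) (gconj g y).
have e2 := E2' g h (gconj h g) y.
have a := R2 g y h.
have b := R2 g h (gconj (ginv h) y).
gnorm_in r1; gnorm_in wi; gnorm_in e2; gnorm_in a; gnorm_in b.
rewrite -b a in e2.
move/(congr1 (fun t => gmul t (ginv (w g h)))): e2.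
rewrite -!gmulA mulgV mulg1 => e2.
gnorm. rewrite r1 wi -e2. gnorm. done.
Qed.

Lemma E3 g h u v : gcomm (w g h) (w u v) = w (gcomm g h) (gcomm u v).
Proof.
rewrite F.
have := E2' u v g h.
move/(congr1 (fun t => gmul t (ginv (w u v)))).
rewrite -!gmulA mulgV mulg1 => <-.
by gnorm.
Qed.
End Pairing.
Section Alg.
Variable W : group.
Implicit Types x y z : W.
Definition commute x y := gmul x y = gmul y x.

Lemma gpow_add x m n : gpow x (m + n) = gmul (gpow x m) (gpow x n).
Proof. elim: m => [|m IH] /=; first by rewrite gmul1. by rewrite IH gmulA. Qed.

Lemma commute_powr x y n : commute x y -> commute x (gpow y n).
Proof.
rewrite /commute => c; elim: n => [|n IH] /=; first by rewrite gmul1 mulg1.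
by rewrite gmulA c -gmulA IH gmulA.
Qed.

Lemma commute_sym x y : commute x y -> commute y x.
Proof. by []. Qed.

Lemma commute_powl x y n : commute x y -> commute (gpow x n) y.
Proof. by move=> c; apply: commute_sym; apply: commute_powr. Qed.

Lemma gpowSr x n : gpow x n.+1 = gmul (gpow x n) x.
Proof. by rewrite /= (commute_powr n (erefl (gmul x x))). Qed.

Lemma comm_eq x y z : gcomm x y = z -> gmul x y = gmul z (gmul y x).
Proof. by move=> <-; gnorm. Qed.

Lemma comm1 x y : gcomm x y = gone W -> commute x y.
Proof. by move/comm_eq; rewrite gmul1. Qed.

Variables a b Z Y X : W.
Hypotheses (h1 : gmul b a = gmul Z (gmul a b)) (h2 : gmul a Z = gmul Y (gmul Z a))
  (h3 : gmul b Z = gmul X (gmul Z b)).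
Hypotheses (cXa : commute X a) (cXb : commute X b) (cXZ : commute X Z) (cXY : commute X Y)
  (cYa : commute Y a) (cYZ : commute Y Z).

Lemma L3 n : gmul b (gpow Z n) = gmul (gpow X n) (gmul (gpow Z n) b).
Proof.
elim: n => [|n IH] /=; first by rewrite !gmul1 mulg1.
rewrite gmulA h3 -!gmulA IH -?gmulA; congr (gmul _ _).
by rewrite gmulA (commute_powr n (commute_sym cXZ)) -gmulA.
Qed.

Lemma L4 n : gmul a (gpow Z n) = gmul (gpow Y n) (gmul (gpow Z n) a).
Proof.
elim: n => [|n IH] /=; first by rewrite !gmul1 mulg1.
rewrite gmulA h2 -!gmulA IH -?gmulA; congr (gmul _ _).
by rewrite gmulA (commute_powr n (commute_sym cYZ)) -gmulA.
Qed.

Lemma L1 n : gmul (gpow b n) a = gmul (gpow X 'C(n, 2)) (gmul (gpow Z n) (gmul a (gpow b n))).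
Proof.
elim: n => [|n IH] /=; first by rewrite !gmul1 mulg1.
rewrite -gmulA IH gmulA (commute_powr _ (commute_sym cXb)).
rewrite -gmulA (gmulA b) L3 binS bin1 gpow_add -!gmulA; congr (gmul _ _); congr (gmul _ _).
rewrite (gmulA b a) h1 -!gmulA gmulA -(commute_powr (x:=Z) (y:=Z) n (erefl _)).
by rewrite -!gmulA.
Qed.

Lemma L2 n m : gmul (gpow a n) (gpow Z m) = gmul (gpow Y (n * m)) (gmul (gpow Z m) (gpow a n)).
Proof.
elim: n => [|n IH] /=; first by rewrite !gmul1 mulg1.
rewrite -gmulA IH gmulA (commute_powr _ (commute_sym cYa)) -gmulA (gmulA a) L4.
by rewrite mulSnr gpow_add -!gmulA.
Qed.

Lemma binid n : 2 * 'C(n, 2) + n = n * n.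
Proof.
elim: n => [|n IH] //; rewrite binS bin1.
have : n.+1 * n.+1 = n * n + 2 * n + 1 by lia.
move=> ->; lia.
Qed.

Lemma swap x y r : commute x y -> gmul y (gmul x r) = gmul x (gmul y r).
Proof. by move=> c; rewrite gmulA -c -gmulA. Qed.

Lemma cpow x y m n : commute x y -> commute (gpow x m) (gpow y n).
Proof. by move=> c; apply: commute_powl; apply: commute_powr. Qed.

Lemma alg n : gpow (gmul a b) n =
  gmul (gpow X 'C(n, 3))
  (gmul (gpow Y (2 * 'C(n, 3) + 'C(n, 2)))
  (gmul (gpow Z 'C(n, 2))
  (gmul (gpow a n) (gpow b n)))).
Proof.
elim: n => [|n IH]; first by rewrite /= !gmul1.
rewrite gpowSr IH -!gmulA (gmulA (gpow b n) a) L1.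
have e : 2 * ('C(n,3) + 'C(n,2)) + ('C(n,2) + n) = (2*'C(n,3) + 'C(n,2)) + n*n.
  by have := binid n; lia.
rewrite !binS bin1 e (gpow_add X) (gpow_add Y (2 * _ + _)) (gpow_add Z) !gpowSr -!gmulA; congr (gmul _ _).
rewrite (swap _ (cpow _ _ cXa)) (swap _ (cpow _ _ cXZ)) (swap _ (cpow _ _ cXY)).
congr (gmul _ _); congr (gmul _ _).
rewrite (gmulA (gpow a n) (gpow Z n)) L2 -!gmulA.
rewrite (swap _ (cpow _ _ cYZ)) (gmulA (gpow a n) a) -gpowSr /= -!gmulA. reflexivity.
Qed.
End Alg.

Theorem theorem3p8 (G : group) (hG : nilpotent_of_class G 5)
  (W : group) (w : G -> G -> W) (hw : exterior_pairing w)
  (g1 g2 h1 h2 : G) (n : nat) :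
  let c1 := gcomm g1 h1 in
  let c2 := gcomm g2 h2 in
  gpow (gmul (w g1 h1) (w g2 h2)) n =
  gmul (gpow (w c2 (gcomm c2 c1)) 'C(n, 3))
  (gmul (gpow (w c1 (gcomm c2 c1)) (2 * 'C(n, 3) + 'C(n, 2)))
  (gmul (gpow (w c2 c1) 'C(n, 2))
  (gmul (gpow (w g1 h1) n) (gpow (w g2 h2) n)))).
Proof.
move=> c1 c2.
have [e1 e2] := comm_d hG g1 h1 g2 h2.
rewrite -/c1 -/c2 in e1 e2.
have K : forall (x : G), gcomm x (gcomm c2 c1) = gone G ->
   forall u v, commute (w x (gcomm c2 c1)) (w u v).
  move=> x ex u v; apply: comm1; rewrite E3 // ex w1l //.
apply: alg.
- by apply: comm_eq; rewrite E3.
- by apply: comm_eq; rewrite E3.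
- by apply: comm_eq; rewrite E3.
- exact: K.
- exact: K.
- exact: K.
- exact: K.
- exact: K.
- exact: K.
Qed.
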